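(* For every integer $d\geq 1$, $c_{d((2),(2)),\,d((2),(2))}^{d((2),(2))}=1$, i.e. the multiplicity of $M_{((2d),(2d))}$ in $M_{((2d),(2d))}\otimes M_{((2d),(2d))}$ equals $1$.
   Context: A double partition of $n$ is an ordered pair $(\alpha^+,\alpha^-)$ of partitions with $|\alpha^+|+|\alpha^-|=n$. Let $W_n=(\mathbb{Z}/2\mathbb{Z})^n\rtimes\mathfrak{S}_n$ be the hyperoctahedral group. For complex vector spaces $V^+,V^-$ and $V=V^+\oplus V^-$, $W_n$ acts on $V^{\otimes n}$ ($\mathfrak{S}_n$ permuting tensor factors, the $i$-th generator of $(\mathbb{Z}/2\mathbb{Z})^n$ acting by $\mathrm{id}_{V^+}\oplus(-\mathrm{id}_{V^-})$ on the $i$-th factor), commuting with $\mathrm{GL}(V^+)\times\mathrm{GL}(V^-)$, and $V^{\otimes n}\simeq\bigoplus_{(\alpha^+,\alpha^-)}\mathbb{S}^{\alpha^+}(V^+)\otimes\mathbb{S}^{\alpha^-}(V^-)\otimes M_{\alpha^\pm}$ over double partitions of $n$ with $\ell(\alpha^\pm)\leq\dim V^\pm$; this defines the irreducible $W_n$-representation $M_{\alpha^\pm}$. $c_{\alpha^\pm,\beta^\pm}^{\gamma^\pm}$ is the multiplicity of $M_{\gamma^\pm}$ in $M_{\alpha^\pm}\otimes M_{\beta^\pm}$. $d((2),(2))=((2d),(2d))$. *)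

(* Defs.v *)
From HB Require Import structures.
From mathcomp Require Import all_boot all_order all_algebra all_fingroup all_field.
Set Implicit Arguments. Unset Strict Implicit. Unset Printing Implicit Defensive.
Import GRing.Theory Num.Theory.
Local Open Scope ring_scope.

(* Hyperoctahedral group W_n realised as the group of signed permutations:
   permutations of 'I_n * bool commuting with the sign flip (i,b) |-> (i,~~b). *)
Definition flipf n (x : 'I_n * bool) : 'I_n * bool := (x.1, ~~ x.2).
Lemma flipfK n : involutive (@flipf n).
Proof. by case=> i b; rewrite /flipf /= negbK. Qed.
Definition flipn n : {perm 'I_n * bool} := perm (inv_inj (@flipfK n)).

Definition hyperoct n : {group {perm 'I_n * bool}} := ('C[flipn n])%G.

Definition sperm n (w : {perm 'I_n * bool}) (i : 'I_n) : 'I_n := (w (i, false)).1.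
Definition sflip n (w : {perm 'I_n * bool}) (i : 'I_n) : bool := (w (i, false)).2.

(* Matrix of w acting (on the right) on V^{(x)n} with V^+ = C e, V^- = C f
   (dim V^+ = dim V^- = 1), restricted to the weight (n-m, m) subspace, i.e.
   the span of tensors with f in the positions S, #|S| = m.  By the defining
   decomposition, this subspace is exactly M_{((n-m),(m))}. *)
Definition Mrep n m (w : {perm 'I_n * bool}) (S T : {set 'I_n}) : algC :=
  if [&& #|S| == m, #|T| == m & T == sperm w @: S]
  then \prod_(i in S) (-1) ^+ sflip w i else 0.

Definition Mchar n m (w : {perm 'I_n * bool}) : algC :=
  \sum_(S : {set 'I_n} | #|S| == m) Mrep m w S S.

Definition tensor_mult (gT : finGroupType) (G : {group gT})
  (chiA chiB chiC : gT -> algC) : algC :=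
  #|G|%:R^-1 * \sum_(w in G) chiA w * chiB w * (chiC w)^*.

(* Main.v *)
Require Import Defs.
From mathcomp Require Import all_boot all_order all_algebra all_fingroup all_field.
From mathcomp Require Import zify.
Set Implicit Arguments. Unset Strict Implicit. Unset Printing Implicit Defensive.

Definition trT n := ({set 'I_n} * {set 'I_n} * {set 'I_n})%type.
Definition tact n (t : trT n) (s : {perm 'I_n}) : trT n :=
  ([set s x | x in t.1.1], [set s x | x in t.1.2], [set s x | x in t.2]).

Lemma tact1 n : (@tact n)^~ 1%g =1 id.
Proof.
case=> [[A B] C] /=; rewrite /tact /=.
have e : forall D : {set 'I_n}, [set (1%g : {perm 'I_n}) x | x in D] = D.
  by move=> D; rewrite -[RHS]imset_id; apply: eq_imset => x; rewrite perm1.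
by rewrite !e.
Qed.

Lemma tactM n (t : trT n) : act_morph (@tact n) t.
Proof.
move=> s1 s2; case: t => [[A B] C]; rewrite /tact /=.
have e : forall D : {set 'I_n}, [set (s1 * s2)%g x | x in D] = [set s2 x | x in [set s1 x | x in D]].
  by move=> D; rewrite -imset_comp; apply: eq_imset => x; rewrite permM.
by rewrite !e.
Qed.

Definition TA n := TotalAction (@tact1 n) (@tactM n).

Definition kc n (t : trT n) (x : 'I_n) : nat := (x \in t.1.1) + (x \in t.1.2) + (x \in t.2).
Definition good n m (t : trT n) :=
  [&& #|t.1.1| == m, #|t.1.2| == m, #|t.2| == m & [forall x, ~~ odd (kc t x)]].

Lemma good_act n m t s : good m t -> good m (@tact n t s).
Proof.
case/and4P=> h1 h2 h3 /forallP h4; apply/and4P; split; rewrite /tact /=.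
- by rewrite card_imset //; exact: perm_inj.
- by rewrite card_imset //; exact: perm_inj.
- by rewrite card_imset //; exact: perm_inj.
apply/forallP=> y; rewrite -(permKV s y) /kc /= !mem_imset; try exact: perm_inj.
exact: h4.
Qed.

Definition trip n (g : 'I_n -> 'I_4) : trT n :=
  ([set x | (g x == 1 :> nat) || (g x == 2 :> nat)],
   [set x | (g x == 1 :> nat) || (g x == 3 :> nat)],
   [set x | (g x == 2 :> nat) || (g x == 3 :> nat)]).

Lemma trip_act n (g g' : 'I_n -> 'I_4) (s : {perm 'I_n}) : (forall x, g' (s x) = g x) -> tact (trip g) s = trip g'.
Proof.
move=> H; rewrite /tact /trip /=.
have e : forall P : nat -> bool, [set s x | x in [set x | P (g x)]] = [set x | P (g' x)].
  move=> P; apply/setP=> y; rewrite -(permKV s y) mem_imset; last exact: perm_inj.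
  by rewrite !inE H.
by rewrite (e (fun v => (v == 1) || (v == 2))) (e (fun v => (v == 1) || (v == 3)))
  (e (fun v => (v==2)||(v==3))).
Qed.

Definition N n (g : 'I_n -> 'I_4) (v : nat) := #|[set x | g x == v :> nat]|.

Lemma card_or n (P Q : pred 'I_n) : (forall x, ~~ (P x && Q x)) ->
  #|[set x | P x || Q x]| = #|[set x | P x]| + #|[set x | Q x]|.
Proof.
move=> H; rewrite -[RHS](cardUI [set x | P x] [set x | Q x]).
have -> : #|[predI [set x | P x] & [set x | Q x]]| = 0.
  by apply: eq_card0 => x; rewrite !inE; exact: negbTE (H x).
by rewrite addn0; apply: eq_card => x; rewrite !inE.
Qed.

Lemma card12 n (g : 'I_n -> 'I_4) a b : a != b ->
  #|[set x | (g x == a :> nat) || (g x == b :> nat)]| = N g a + N g b.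
Proof.
move=> hab; rewrite (card_or (P := fun x => g x == a :> nat) (Q := fun x => g x == b :> nat)) //.
by move=> x; apply/negP => /andP [/eqP -> /eqP e]; rewrite e eqxx in hab.
Qed.

Lemma N_sum n (g : 'I_n -> 'I_4) : N g 0 + N g 1 + N g 2 + N g 3 = n.
Proof.
transitivity #|[set x | (g x == 0 :> nat) || ((g x == 1 :> nat) || ((g x == 2 :> nat) || (g x == 3 :> nat)))]|; last first.
  rewrite -[RHS]card_ord; apply: eq_card => x; rewrite inE; move: (ltn_ord (g x)).
  by case: (nat_of_ord (g x)) => [|[|[|[|]]]].
rewrite (card_or (P := fun x => g x == 0 :> nat)); last first.
  by move=> x; case: (nat_of_ord (g x)) => [|[|[|[|]]]].
rewrite (card_or (P := fun x => g x == 1 :> nat)); last first.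
  by move=> x; case: (nat_of_ord (g x)) => [|[|[|[|]]]].
rewrite (card_or (P := fun x => g x == 2 :> nat)); last first.
  by move=> x; case: (nat_of_ord (g x)) => [|[|[|[|]]]].
by rewrite /N !addnA.
Qed.

Definition lab n (t : trT n) (x : 'I_n) : 'I_4 :=
  inord (if x \in t.1.1 then (if x \in t.1.2 then 1 else 2) else (if x \in t.1.2 then 3 else 0)).

Lemma labE n (t : trT n) x : (lab t x : nat) =
  (if x \in t.1.1 then (if x \in t.1.2 then 1 else 2) else (if x \in t.1.2 then 3 else 0)).
Proof. by rewrite inordK //; case: ifP; case: ifP. Qed.

Lemma trip_lab n m (t : trT n) : good m t -> trip (lab t) = t.
Proof.
case/and4P=> _ _ _ /forallP; case: t => [[A B] C] H.
rewrite /trip; congr (_, _, _); apply/setP=> x; rewrite inE labE /=;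
  move: (H x); rewrite /kc /=;
  by case: (x \in A); case: (x \in B); case: (x \in C).
Qed.

Definition bal n k (g : 'I_n -> 'I_4) := forall v, v < 4 -> N g v = k.+1.

Lemma lab_bal n k (t : trT n) : n = 4 * k.+1 -> good (2 * k.+1) t -> bal k (lab t).
Proof.
move=> En Hg; have Ht := trip_lab Hg.
move: Hg; rewrite -{1}Ht; case/and4P => /eqP h1 /eqP h2 /eqP h3 _.
move: h1 h2 h3; rewrite /= !card12 // => h1 h2 h3.
have hs := etrans (N_sum (lab t)) En.
by move=> [|[|[|[|v]]]] //= _; lia.
Qed.

Definition rk n (g : 'I_n -> 'I_4) (x : 'I_n) := #|[set y : 'I_n | (y < x) && (g y == g x)]|.

Lemma rk_lt n k (g : 'I_n -> 'I_4) (x : 'I_n) : bal k g -> rk g x < k.+1.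
Proof.
move=> hb.
have sub : [set y : 'I_n | (y < x) && (g y == g x)] \subset [set y : 'I_n | g y == g x :> nat] :\ x.
  apply/subsetP => y; rewrite !inE.
  case/andP=> lt e; rewrite (eqP e) eqxx andbT.
  by apply: contraTneq lt => ->; rewrite ltnn.
rewrite -(hb (g x)) ?ltn_ord //.
unfold N, rk; rewrite [X in _ < X](cardsD1 x) in_set eqxx /= ltnS.
exact: subset_leq_card sub.
Qed.

Lemma rk_mono n (g : 'I_n -> 'I_4) (x y : 'I_n) : x < y -> g x = g y -> rk g x < rk g y.
Proof.
move=> lt e; apply: proper_card; apply/properP; split.
  apply/subsetP => z; rewrite !inE -e; case/andP => h ->.
  by rewrite (ltn_trans h lt).
by exists x; rewrite !inE ?ltnn // lt -e eqxx.
Qed.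

Definition hh n k (g : 'I_n -> 'I_4) (x : 'I_n) : 'I_4 * 'I_k.+1 := (g x, inord (rk g x)).

Lemma hh_inj n k (g : 'I_n -> 'I_4) : bal k g -> injective (hh k g).
Proof.
move=> hb x y [e er].
have ex : rk g x = rk g y.
  by have := congr1 val er; rewrite /= !inordK // ?(rk_lt _ hb).
apply/val_inj => /=; case: (ltngtP x y) => // h.
  by move: (rk_mono h e); rewrite ex ltnn.
by move: (rk_mono h (esym e)); rewrite ex ltnn.
Qed.

Lemma bal_trans n k (g g0 : 'I_n -> 'I_4) : n = 4 * k.+1 -> bal k g -> bal k g0 ->
  exists s : {perm 'I_n}, forall x, g (s x) = g0 x.
Proof.
move=> En hb hb0.
have hinj := hh_inj hb.
have hc : forall y : 'I_4 * 'I_k.+1, y \in codom (hh k g).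
  by apply: inj_card_onto => //; rewrite card_prod !card_ord En.
pose sf x := iinv (hc (hh k g0 x)).
have sfE x : hh k g (sf x) = hh k g0 x by rewrite f_iinv.
have sinj : injective sf.
  by move=> x y e; apply: (hh_inj hb0); rewrite -!sfE e.
by exists (perm sinj) => x; rewrite permE; have := congr1 fst (sfE x).
Qed.

Lemma bal_exists n k : n = 4 * k.+1 -> exists g : 'I_n -> 'I_4, bal k g.
Proof.
move=> En.
have ec : #|{: 'I_4 * 'I_k.+1}| = n by rewrite card_prod !card_ord En.
pose e (x : 'I_n) : 'I_4 * 'I_k.+1 := enum_val (cast_ord (esym ec) x).
have einj : injective e by move=> x y /enum_val_inj /cast_ord_inj.
have hs : forall y, y \in codom e by apply: inj_card_onto => //; rewrite ec card_ord.
exists (fun x => (e x).1) => v hv; rewrite /N.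
rewrite -(card_imset _ einj).
have -> : [set e x | x in [set x | (e x).1 == v :> nat]] = setX [set (inord v : 'I_4)] setT.
  apply/setP => p; have [x ->] := codomP (hs p).
  rewrite mem_imset // !inE andbT; case: (e x) => a b /=.
  by rewrite -val_eqE /= inordK.
by rewrite cardsX cards1 cardsT card_ord mul1n.
Qed.

Lemma good_trip n k (g : 'I_n -> 'I_4) : bal k g -> good (2 * k.+1) (trip g).
Proof.
move=> hb; apply/and4P; split => /=.
- by rewrite card12 // !hb //; apply/eqP; lia.
- by rewrite card12 // !hb //; apply/eqP; lia.
- by rewrite card12 // !hb //; apply/eqP; lia.
apply/forallP => x; rewrite /kc /= !inE; move: (ltn_ord (g x)).
by case: (nat_of_ord (g x)) => [|[|[|[|]]]].
Qed.

Lemma orbit_sum n k : n = 4 * k.+1 ->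
  \sum_(t : trT n | good (2 * k.+1) t) #|'C[t | TA n]%g| = n`!.
Proof.
move=> En.
have [g0 hb0] := bal_exists En.
pose t0 := trip g0.
pose G := [set: {perm 'I_n}]%G.
have Horb : forall t, good (2 * k.+1) t = (t \in orbit (TA n) G t0).
  move=> t; apply/idP/idP.
  - move=> hg; have hbt := lab_bal En hg.
    have [s hs] := bal_trans En hbt hb0.
    apply/orbitP; exists s; first by rewrite inE.
    by rewrite /= (trip_act hs) (trip_lab hg).
  - by case/orbitP => s _ <-; apply: good_act; exact: good_trip.
have Ht0 : t0 \in orbit (TA n) G t0 by exact: orbit_refl.
have Opos : 0 < #|orbit (TA n) G t0| by apply/card_gt0P; exists t0.
apply/eqP; rewrite -(eqn_pmul2l Opos); apply/eqP.
rewrite big_distrr /=.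
rewrite (eq_bigr (fun _ => n`!)); last first.
  move=> t ht; rewrite Horb in ht.
  have := card_orbit_stab (TA n) G t.
  by rewrite (orbit_eqP ht) setTI cardsT card_Sn.
rewrite sum_nat_const; congr (_ * _).
apply: eq_card => t; rewrite unfold_in /=; exact: Horb.
Qed.

Import GRing.Theory Num.Theory.
Local Open Scope ring_scope.
Definition Wf n (p : {ffun 'I_n -> bool} * {perm 'I_n}) (q : 'I_n * bool) : 'I_n * bool :=
  (p.2 q.1, q.2 (+) p.1 q.1).
Lemma Wf_inj n p : injective (@Wf n p).
Proof.
move=> [i b] [j c] [/perm_inj e]; subst j => /=.
by case: b; case: c; case: (p.1 i).
Qed.
Definition W n p : {perm 'I_n * bool} := perm (@Wf_inj n p).

Lemma W_in n p : W p \in hyperoct n.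
Proof.
apply/cent1P; apply/permP => -[i b]; rewrite !permM !permE /Wf /flipf /=.
by case: b; case: (p.1 i).
Qed.

Lemma W_inj n : injective (@W n).
Proof.
move=> [f s] [f' s'] e.
have h i := congr1 (fun u : {perm _} => u (i, false)) e.
congr (_, _); [apply/ffunP | apply/permP] => i; move: (h i); rewrite !permE /Wf /=; by case.
Qed.

Lemma G_sub n (w : {perm 'I_n * bool}) : w \in hyperoct n -> exists p, w = W p.
Proof.
move/cent1P => hc.
have wt i : w (i, true) = flipf (w (i, false)).
  have := congr1 (fun u : {perm _} => u (i, false)) hc.
  by rewrite !permM !permE /flipf /=.
have sinj : injective (sperm w).
  move=> i j; rewrite /sperm => e.
  case E: ((w (i,false)).2 == (w (j,false)).2).
  - have : w (i,false) = w (j,false).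
      by move: e (eqP E); case: (w (i,false)) => ? ?; case: (w (j,false)) => ? ? /= -> ->.
    by move/perm_inj => [].
  - have : w (i,false) = w (j,true).
      rewrite wt /flipf; move: e E; case: (w (i,false)) => a b; case: (w (j,false)) => a' b' /= ->.
      by case: b; case: b'.
    by move/perm_inj.
exists ([ffun i => sflip w i], perm sinj); apply/permP => -[i b].
rewrite permE /Wf /= ffunE permE /sperm /sflip.
case: b => /=; last by case: (w (i,false)).
by rewrite wt /flipf /=; case: (w (i,false)).
Qed.

Lemma G_eq n : (hyperoct n : {set _}) = [set W p | p in [set: {ffun 'I_n -> bool} * {perm 'I_n}]].
Proof.
apply/setP => w; apply/idP/imsetP.
- by move/G_sub => [p ->]; exists p; rewrite ?inE.
- by case=> p _ ->; apply: W_in.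
Qed.

Lemma G_card n : #|hyperoct n| = (2 ^ n * n`!)%N.
Proof.
by rewrite G_eq card_imset ?cardsT ?card_prod ?card_ffun ?card_bool ?card_ord ?card_Sn //; exact: W_inj.
Qed.

Definition cc n (p : {ffun 'I_n -> bool} * {perm 'I_n}) (S : {set 'I_n}) : algC :=
  if S == [set p.2 x | x in S] then \prod_(i in S) (-1) ^+ p.1 i else 0.

Lemma Mchar_W n m p : Mchar m (@W n p) = \sum_(S : {set 'I_n} | #|S| == m) cc p S.
Proof.
rewrite /Mchar; apply: eq_bigr => S /eqP hS; rewrite /Mrep hS eqxx /= /cc.
have -> : [set sperm (W p) x | x in S] = [set p.2 x | x in S].
  by apply: eq_imset => x; rewrite /sperm permE.
case: ifP => // _; apply: eq_bigr => i _; by rewrite /sflip permE.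
Qed.

Lemma Mchar_conj n m (w : {perm 'I_n * bool}) : (Mchar m w)^* = Mchar m w.
Proof.
rewrite /Mchar rmorph_sum; apply: eq_bigr => S _; rewrite /Mrep.
case: ifP => _; rewrite ?rmorph0 // rmorph_prod; apply: eq_bigr => i _.
by rewrite rmorphXn rmorphN1.
Qed.

Lemma cube3 (T : finType) (P : pred T) (F : T -> algC) :
  (\sum_(i | P i) F i) * (\sum_(i | P i) F i) * (\sum_(i | P i) F i) =
  \sum_(t : T * T * T | P t.1.1 && P t.1.2 && P t.2) F t.1.1 * F t.1.2 * F t.2.
Proof.
have e1 : (\sum_(i | P i) F i) * (\sum_(i | P i) F i) =
    \sum_(ij : T * T | P ij.1 && P ij.2) F ij.1 * F ij.2.
  rewrite -(pair_big P P (fun i j => F i * F j)) mulr_suml.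
  by apply: eq_bigr => i _; rewrite mulr_sumr.
rewrite e1 -(pair_big (fun ij : T * T => P ij.1 && P ij.2) P (fun ij k => F ij.1 * F ij.2 * F k)).
by rewrite mulr_suml; apply: eq_bigr => i _; rewrite mulr_sumr.
Qed.

Definition fixb n (s : {perm 'I_n}) (t : trT n) :=
  [&& t.1.1 == [set s x | x in t.1.1], t.1.2 == [set s x | x in t.1.2] & t.2 == [set s x | x in t.2]].

Lemma fixbE n (s : {perm 'I_n}) t : (s \in 'C[t | TA n]%g) = fixb s t.
Proof.
case: t => [[A B] C]; rewrite /fixb /=.
apply/astab1P/idP => [h | /and3P [/eqP ha /eqP hb /eqP hc]].
- by move: h; rewrite /= /tact /= => -[ha hb hc]; rewrite ha hb hc !eqxx.
- by rewrite /= /tact /= -ha -hb -hc.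
Qed.

Lemma prod_sign n (k : 'I_n -> nat) :
  \prod_i ((-1) ^+ k i + 1 : algC) = if [forall i, ~~ odd (k i)] then 2 ^+ n else 0.
Proof.
case: ifP => [/forallP H | /negbT /forallPn [i hi]].
- rewrite (eq_bigr (fun _ => 2)) ?prodr_const ?card_ord // => i _.
  by rewrite -signr_odd (negbTE (H i)) expr0.
- by rewrite negbK in hi; rewrite (bigD1 i) //= -signr_odd hi expr1 addNr mul0r.
Qed.

Lemma prod_in n (A : {set 'I_n}) (f : {ffun 'I_n -> bool}) :
  \prod_(i in A) ((-1) ^+ f i : algC) = \prod_i (-1) ^+ (f i * (i \in A)).
Proof.
rewrite big_mkcond /=; apply: eq_bigr => i _.
by case: (i \in A); rewrite ?muln1 ?muln0 ?expr0.
Qed.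

Lemma inner n (t : trT n) :
  \sum_(p : {ffun 'I_n -> bool} * {perm 'I_n}) cc p t.1.1 * cc p t.1.2 * cc p t.2 =
  if [forall x, ~~ odd (kc t x)] then (2 ^ n * #|'C[t | TA n]%g|)%:R else 0.
Proof.
transitivity (\sum_(f : {ffun 'I_n -> bool}) \sum_(s : {perm 'I_n})
   cc (f, s) t.1.1 * cc (f, s) t.1.2 * cc (f, s) t.2).
  by rewrite pair_bigA; apply: eq_bigr => -[f s].
rewrite exchange_big /=.
have key : forall s : {perm 'I_n}, \sum_(f : {ffun 'I_n -> bool})
    cc (f, s) t.1.1 * cc (f, s) t.1.2 * cc (f, s) t.2 =
    if s \in 'C[t | TA n]%g then \prod_i ((-1) ^+ kc t i + 1) else 0.
  move=> s; rewrite fixbE /fixb /cc /=.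
  case: (t.1.1 == _); case: (t.1.2 == _); case: (t.2 == _) => /=;
    try (by rewrite big1 // => f _; rewrite ?mul0r ?mulr0 ?mul0r).
  have e : forall f : {ffun 'I_n -> bool},
      (\prod_(i in t.1.1) (-1) ^+ f i) * (\prod_(i in t.1.2) (-1) ^+ f i) *
      (\prod_(i in t.2) (-1) ^+ f i) = \prod_i ((-1) ^+ (f i * kc t i) : algC).
    move=> f; rewrite !prod_in -!big_split /=; apply: eq_bigr => i _.
    rewrite /kc !mulnDr !exprD.
    by congr (_ * _ * _); case: (_ \in _); rewrite ?muln1 ?muln0 ?expr0.
  rewrite (eq_bigr _ (fun f _ => e f)).
  rewrite -(bigA_distr_bigA (fun i (b : bool) => ((-1) ^+ (b * kc t i) : algC))).
  by apply: eq_bigr => i _; rewrite big_bool /= mul1n mul0n expr0.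
under eq_bigr do rewrite key.
rewrite -big_mkcond /= sumr_const prod_sign.
case: ifP => _; last by rewrite mul0rn.
by rewrite natrM natrX mulr_natr.
Qed.

Lemma inner2 n (t : trT n) :
  \sum_(p in [set: {ffun 'I_n -> bool} * {perm 'I_n}]) cc p t.1.1 * cc p t.1.2 * cc p t.2 =
  if [forall x, ~~ odd (kc t x)] then (2 ^ n * #|'C[t | TA n]%g|)%:R else 0.
Proof. by rewrite -inner; apply: eq_bigl => p; rewrite inE. Qed.

Theorem lemma5p5 (d : nat) : (0 < d)%N ->
  tensor_mult (hyperoct (4 * d)%N)
    (@Mchar (4 * d)%N (2 * d)%N) (@Mchar (4 * d)%N (2 * d)%N) (@Mchar (4 * d)%N (2 * d)%N) = 1.
Proof.
case: d => // k _.
rewrite /tensor_mult.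
under eq_bigr do rewrite Mchar_conj.
rewrite G_card G_eq big_imset /=; last by move=> p q _ _; exact: W_inj.
under eq_bigr do rewrite Mchar_W cube3.
rewrite exchange_big /=.
under eq_bigr => t _ do rewrite inner2.
rewrite -big_mkcondr -natr_sum -big_distrr /=.
rewrite (eq_bigl (good (2 * k.+1))); last by move=> t; rewrite /good !andbA.
rewrite orbit_sum //.
by rewrite mulVf // pnatr_eq0 -lt0n muln_gt0 expn_gt0 fact_gt0.
Qed.
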